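(* Let $n$ be an even positive integer and let $\mathbb{F}$ be a field with $\operatorname{char}(\mathbb{F})\neq 2$ and $|\mathbb{F}|\geq n^2+1$. Let $Q_n$ denote the set of all $n\times n$ skew-symmetric matrices over $\mathbb{F}$. If $a,b\in Q_n$ satisfy $\det(a+x)=\det(b+x)$ for all $x\in Q_n$, then $a=b$.
   Context: A matrix $x$ is skew-symmetric if $x^t=-x$. *)

(* Defs.v *)
From HB Require Import structures.
From mathcomp Require Import all_boot all_order all_algebra.
Set Implicit Arguments. Unset Strict Implicit. Unset Printing Implicit Defensive.
Import GRing.Theory.
Local Open Scope ring_scope.

Definition skew_symmetric (F : fieldType) (n : nat) (x : 'M[F]_n) : Prop :=
  x^T = - x.

(* |F| >= m, valid also for infinite F: F contains m pairwise distinct elements. *)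
Definition card_at_least (F : fieldType) (m : nat) : Prop :=
  exists s : seq F, uniq s /\ (m <= size s)%N.

(* Main.v *)
Require Import Defs.
From HB Require Import structures.
From mathcomp Require Import all_boot all_order all_algebra.
Import GRing.Theory.
Local Open Scope ring_scope.
From mathcomp Require Import zify.
Set Implicit Arguments. Unset Strict Implicit.

Lemma horner_char (F : fieldType) n (A : 'M[F]_n) a :
  (char_poly A).[a] = \det (a%:M - A).
Proof.
rewrite -horner_evalE /char_poly -det_map_mx; congr (\det _).
apply/matrixP => i j; rewrite !mxE /horner_evalE.
by case: (i == j); [change (('X *+ 1 - (A i j)%:P).[a] = a *+ 1 - A i j) | change (('X *+ 0 - (A i j)%:P).[a] = a *+ 0 - A i j)]; rewrite !hornerE.
Qed.

Lemma all_roots0 (F : fieldType) (p : {poly F}) (s : seq F) :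
  uniq s -> (size p <= size s)%N -> (forall x, root p x) -> p = 0.
Proof.
move=> us hs hr; apply/eqP; apply/negPn/negP => p0.
have := max_poly_roots p0 _ us.
have -> : all (root p) s by apply/allP => x _; exact: hr.
by move=> /(_ isT); rewrite ltnNge hs.
Qed.

Lemma tr_delta (F : fieldType) n (i j : 'I_n) (c : 'M[F]_n) :
  \tr (delta_mx i j *m c) = c j i.
Proof.
rewrite /mxtrace (bigD1 i) //= big1 ?addr0 => [|k kni].
  rewrite !mxE (bigD1 j) //= big1 ?addr0 => [|l lnj]; first by rewrite !mxE !eqxx mul1r.
  by rewrite !mxE (negbTE lnj) andbF mul0r.
rewrite !mxE big1 // => l _; by rewrite !mxE (negbTE kni) mul0r.
Qed.

Definition pv (k : nat) : nat := if odd k then k.-1 else k.+1.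

Lemma pvK k : pv (pv k) = k.
Proof. rewrite /pv; case: k => [|k] //=; case ok: (odd k) => /=; by rewrite ?ok. Qed.

Lemma odd_pv k : odd (pv k) = ~~ odd k.
Proof. rewrite /pv; case: k => [|k] //=; case ok: (odd k) => /=; by rewrite ?ok. Qed.

Lemma pv_lt n k : ~~ odd n -> (k < n)%N -> (pv k < n)%N.
Proof.
rewrite /pv => hn hk; case: ifP => ok; first by rewrite (leq_ltn_trans (leq_pred k)).
rewrite ltn_neqAle hk andbT; apply/eqP => e; by rewrite -e /= ok in hn.
Qed.

Lemma pv_sym (i j : nat) : (i == pv j) = (j == pv i).
Proof. by apply/eqP/eqP => ->; rewrite pvK. Qed.

Lemma exJ (F : fieldType) n : ~~ odd n ->
  exists J : 'M[F]_n, J^T = - J /\ J \in unitmx.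
Proof.
move=> hn.
pose P (i : 'I_n) : 'I_n := Ordinal (pv_lt hn (ltn_ord i)).
pose sg (k : nat) : F := if odd k then -1 else 1.
have sgpv k : sg (pv k) = - sg k by rewrite /sg odd_pv; case: (odd k); rewrite ?opprK.
pose J : 'M[F]_n := \matrix_(i, j) if (j : nat) == pv i then sg i else 0.
have Jsk : J^T = - J.
  apply/matrixP => i j; rewrite !mxE pv_sym.
  case: eqP => [->|]; last by rewrite oppr0.
  by rewrite sgpv.
exists J; split => //.
have JJ : J *m (- J) = 1%:M.
  apply/matrixP => i k; rewrite !mxE (bigD1 (P i)) //= big1 ?addr0.
    rewrite !mxE /= eqxx pvK mulrN.
    rewrite eq_sym; case: (i =P k) => [->|ne]; last first.
      rewrite ifF ?mulr0 ?oppr0 //; apply/negP => /eqP e; apply: ne; by [apply: val_inj | ].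
    by rewrite eqxx sgpv /sg; case: (odd k); rewrite ?mulNr ?mulrN ?opprK ?mulr1 ?mul1r.
  move=> j jn; rewrite !mxE.
  have -> : (val j == pv i) = false.
    by apply/negbTE/negP => /eqP e; apply/negP: jn; rewrite negbK; apply/eqP/val_inj.
  by rewrite mul0r.
by case: (mulmx1_unit JJ).
Qed.

Lemma trD (F : fieldType) n (A B : 'M[F]_n) : (A + B)^T = A^T + B^T.
Proof. by apply/matrixP => i j; rewrite !mxE. Qed.
Lemma trN (F : fieldType) n (A : 'M[F]_n) : (- A)^T = - A^T.
Proof. by apply/matrixP => i j; rewrite !mxE. Qed.
Lemma trZ (F : fieldType) n t (A : 'M[F]_n) : (t *: A)^T = t *: A^T.
Proof. by apply/matrixP => i j; rewrite !mxE. Qed.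

Unset Implicit Arguments. Set Strict Implicit.

Theorem lemma2p4 (F : fieldType) (n : nat)
  (hn_pos : (0 < n)%N) (hn_even : ~~ odd n)
  (hchar : 2%N \notin [pchar F])
  (hcard : card_at_least F (n ^ 2).+1)
  (a b : 'M[F]_n) (ha : skew_symmetric a) (hb : skew_symmetric b)
  (hdet : forall x : 'M[F]_n, skew_symmetric x -> \det (a + x) = \det (b + x)) :
  a = b.
Proof.
rewrite /skew_symmetric in ha hb hdet.
have n2 : (2 <= n)%N by case: n hn_pos hn_even {ha hb hdet a b hcard} => [|[|n]].
have two0 : (2%:R : F) != 0.
  by move: hchar; rewrite inE /=.
case: hcard => s [us hs].
have [c cdef] : exists c, c = a - b by exists (a - b).
have csk : c^T = - c by rewrite cdef trD trN ha hb opprD.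
have H1 : forall y : 'M[F]_n, y^T = -y -> \det (c + y) = \det y.
  move=> y hy; have := hdet (y - b).
  rewrite trD trN hy hb opprD => /(_ erefl).
  by rewrite (addrC b) subrK cdef -addrA (addrC (-b)).
have H2 : forall y : 'M[F]_n, y^T = -y -> forall t, \det (y + t *: c) = \det y.
  move=> y hy t; have [->|t0] := eqVneq t 0; first by rewrite scale0r addr0.
  have -> : y + t *: c = t *: (c + t^-1 *: y).
    by rewrite scalerDr scalerA mulfV // scale1r addrC.
  rewrite detZ H1; last by rewrite linearZ /= hy scalerN.
  by rewrite detZ mulrA -exprMn mulfV // expr1n mul1r.
have Hskinv : forall z : 'M[F]_n, z^T = -z -> z \in unitmx -> (invmx z)^T = - invmx z.
  move=> z hz zu; rewrite trmx_inv hz -scaleN1r invmxZ ?invrN1 ?scaleN1r //.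
  by rewrite -scaleN1r unitmxZ // unitrN1.
have Htr : forall z : 'M[F]_n, z^T = -z -> z \in unitmx -> \tr (z *m c) = 0.
  move=> z hz zu; set y := invmx z; have hy := Hskinv z hz zu.
  have hcp : char_poly (z *m c) = 'X^n.
    apply/eqP; rewrite -subr_eq0; apply/eqP; apply: (all_roots0 us).
      apply: leq_trans (size_polyD _ _) _.
      rewrite size_polyN size_char_poly size_polyXn maxnn.
      by apply: leq_trans hs; rewrite ltnS expnS expn1 leq_pmull.
    move=> u; rewrite /root hornerD hornerN hornerXn horner_char subr_eq0.
    have -> : u%:M - z *m c = z *m (u *: y + (-1) *: c).
      by rewrite mulmxDr -!scalemxAr mulmxV // scalemx1 scaleN1r.
    rewrite det_mulmx H2; last by rewrite linearZ /= hy scalerN.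
    by rewrite detZ mulrCA -det_mulmx mulmxV // det1 mulr1.
  have := char_poly_trace (z *m c) hn_pos; rewrite hcp coefXn.
  rewrite (_ : (n.-1 == n) = false); last by case: (n) hn_pos => // m _; rewrite /= (ltn_eqF (ltnSn m)).
  by move/eqP; rewrite eq_sym oppr_eq0 => /eqP.
have HE : forall i j : 'I_n, \tr ((delta_mx i j - delta_mx j i) *m c) = 0.
  move=> i j; have [J [Jsk Ju]] := exJ F hn_even.
  set E := delta_mx i j - delta_mx j i.
  have Esk : E^T = - E by rewrite /E trD trN !trmx_delta opprD opprK addrC.
  pose K := - (invmx J *m E).
  pose p := char_poly K.
  have hdetu : forall u, \det (u *: J + E) = \det J * p.[u].
    move=> u; rewrite horner_char -det_mulmx mulmxBr mul_mx_scalar /K mulmxN opprK.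
    by rewrite mulKVmx.
  pose t := filter (predC (root p)) s.
  have ht : (2 <= size t)%N.
    have r : (size (filter (root p) s) <= n)%N.
      have := max_poly_roots (monic_neq0 (char_poly_monic K)) (filter_all (root p) s) (filter_uniq _ us).
      by rewrite size_char_poly ltnS.
    move: r hs; rewrite /t !size_filter -(count_predC (root p) s).
    move: (count (root p) s) (count (predC (root p)) s) => x y r hs'.
    have : (n + 2 <= n ^ 2)%N by rewrite expnS expn1; nia.
    by lia.
  have u12 : nth 0 t 0 != nth 0 t 1.
    by rewrite nth_uniq ?filter_uniq // (leq_trans _ ht).
  have uu k : (k < size t)%N -> (nth 0 t k *: J + E) \in unitmx.
    move=> kt; rewrite unitmxE hdetu unitfE mulf_neq0 //.
      by rewrite -unitfE -unitmxE.
    by have := mem_nth 0 kt; rewrite mem_filter => /andP [].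
  have tz k : (k < size t)%N -> nth 0 t k * \tr (J *m c) + \tr (E *m c) = 0.
    move=> kt; rewrite -mxtraceZ -mxtraceD scalemxAl -mulmxDl Htr ?uu //.
    by rewrite trD trZ Jsk Esk scalerN [RHS]opprD.
  have e1 := tz 0%N (leq_trans (isT : (1 <= 2)%N) ht); have e2 := tz 1%N ht.
  have : (nth 0 t 0 - nth 0 t 1) * \tr (J *m c) = 0.
    by rewrite mulrBl; apply/eqP; rewrite subr_eq0; apply/eqP; apply: (addIr (\tr (E *m c))); rewrite e1 e2.
  move/eqP; rewrite mulf_eq0 subr_eq0 (negbTE u12) /= => /eqP trJ.
  by rewrite -e1 trJ mulr0 add0r.
have c0 : forall i j, c i j = 0.
  move=> i j; have := HE i j; rewrite mulmxBl raddfB /= !tr_delta.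
  have := congr1 (fun M : 'M[F]_n => M i j) csk; rewrite /= !mxE => ->.
  move/eqP; rewrite -opprD oppr_eq0 -mulr2n -mulr_natr mulf_eq0 (negbTE two0) orbF.
  by move/eqP.
apply/eqP; rewrite -subr_eq0 -cdef; apply/eqP/matrixP => i j; by rewrite c0 mxE.
Qed.
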